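(* For all $s,s^*\in\mathbb R$, $$(s-s^* )\big(\mathrm{shrink}(s)-\mathrm{shrink}(s^* )\big)\ge\frac{|\mathrm{shrink}(s^* )|}{|\mathrm{shrink}(s^* )|+2}(s-s^* )^2\ge0,$$ and the first inequality holds with equality when $s=-\mathrm{sign}(s^* )$.
   Context: $\mathrm{shrink}(s):=\mathrm{sign}(s)\max\{|s|-1,0\}$ (soft-thresholding with threshold $1$). *)

(* Defs.v *)
From Stdlib Require Import Reals Lra.
Open Scope R_scope.

Definition sign (s : R) : R :=
  if Rlt_dec 0 s then 1 else if Rlt_dec s 0 then -1 else 0.

Definition shrink (s : R) : R := sign s * Rmax (Rabs s - 1) 0.

(* Main.v *)
Require Import Defs.
From Stdlib Require Import Reals Lra Psatz.
Open Scope R_scope.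

Lemma key (s t : R) :
  (Rabs (shrink t) + 2) * ((s - t) * (shrink s - shrink t)) >= Rabs (shrink t) * (s - t) ^ 2.
Proof.
  unfold shrink, sign, Rmax.
  repeat (destruct (Rlt_dec _ _)); repeat (destruct (Rle_dec _ _));
  repeat (match goal with |- context [Rabs ?x] => destruct (Rcase_abs x) ; [rewrite (Rabs_left x) by lra | rewrite (Rabs_right x) by lra] end);
  repeat (match goal with H : context [Rabs ?x] |- _ => destruct (Rcase_abs x) ; [rewrite (Rabs_left x) in * by lra | rewrite (Rabs_right x) in * by lra] end);
  try nra;
  match goal with |- (?A) * ((s - t) * ?D) >= ?B * (s - t) ^ 2 =>
    destruct (Rle_dec s t);
    [ assert (A * D - B * (s - t) <= 0) by nra;
      assert (0 <= (t - s) * (B * (s - t) - A * D)) by (apply Rmult_le_pos; lra); nra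
    | assert (A * D - B * (s - t) >= 0) by nra;
      assert (0 <= (s - t) * (A * D - B * (s - t))) by (apply Rmult_le_pos; lra); nra ]
  end.
Qed.

Theorem mainTheorem16 (s sstar : R) :
  ((s - sstar) * (shrink s - shrink sstar)
     >= Rabs (shrink sstar) / (Rabs (shrink sstar) + 2) * (s - sstar) ^ 2
   /\ Rabs (shrink sstar) / (Rabs (shrink sstar) + 2) * (s - sstar) ^ 2 >= 0)
  /\ (s = - sign sstar ->
      (s - sstar) * (shrink s - shrink sstar)
        = Rabs (shrink sstar) / (Rabs (shrink sstar) + 2) * (s - sstar) ^ 2).
Proof.
  pose proof (Rabs_pos (shrink sstar)) as Ha.
  set (a := Rabs (shrink sstar)) in *.
  assert (Hp : a + 2 > 0) by lra.
  split; [split|].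
  - pose proof (key s sstar) as K. fold a in K.
    apply Rle_ge. apply (Rmult_le_reg_l (a+2)); [lra|].
    replace ((a + 2) * (a / (a + 2) * (s - sstar) ^ 2)) with (a * (s - sstar) ^ 2) by (field; lra).
    lra.
  - apply Rle_ge. apply Rmult_le_pos; [|apply pow2_ge_0]. unfold Rdiv. apply Rmult_le_pos; [lra|].
    left; apply Rinv_0_lt_compat; lra.
  - intros ->. apply (Rmult_eq_reg_l (a+2)); [|lra].
    replace ((a + 2) * (a / (a + 2) * (- sign sstar - sstar) ^ 2)) with (a * (- sign sstar - sstar) ^ 2) by (field; lra).
    unfold a; clear a Ha Hp.
    unfold shrink, sign, Rmax.
    repeat (destruct (Rlt_dec _ _)); repeat (destruct (Rle_dec _ _));
    repeat (match goal with |- context [Rabs ?x] => destruct (Rcase_abs x) ; [rewrite (Rabs_left x) by lra | rewrite (Rabs_right x) by lra] end);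
    try lra; try nra; try ring.
Qed.
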